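(* A linear operator $Q:P\to P$ is a $\partial_\psi$-delta operator if and only if there exists an invertible $S\in\Sigma_\psi$ (with $S^{-1}\in\Sigma_\psi$) such that $Q=\partial_\psi S$.
   Context: Let $F$ be a field of characteristic $0$, $P=F[x]$. Fix $(\psi_n)_{n\ge0}$ in $F$ with $\psi_0=1$, $\psi_n\ne0$, $\psi_{-1}=0$; $n_\psi=\psi_{n-1}/\psi_n$, $n_\psi!=1/\psi_n$, $0_\psi!=1$. $\partial_\psi x^n=n_\psi x^{n-1}$ (linear); $E^a(\partial_\psi)=\sum_k\frac{a^k}{k_\psi!}\partial_\psi^k$. $\Sigma_\psi$ is the algebra of linear $T:P\to P$ commuting with all $E^a(\partial_\psi)$, $a\in F$. A $\partial_\psi$-delta operator is $Q\in\Sigma_\psi$ with $Q(x)$ a nonzero constant. *)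

(* Defs.v *)
From HB Require Import structures.
From mathcomp Require Import all_boot all_order all_algebra.
Set Implicit Arguments. Unset Strict Implicit. Unset Printing Implicit Defensive.
Import Order.TTheory GRing.Theory Num.Theory.
Local Open Scope ring_scope.

Section PsiCalculus.
Variable F : fieldType.
Variable psi : nat -> F.

(* n_psi = psi_{n-1} / psi_n, with psi_{-1} = 0, so 0_psi = 0. *)
Definition psinum (n : nat) : F :=
  if n is m.+1 then psi m / psi n else 0.

(* partial_psi : x^n |-> n_psi x^(n-1), extended linearly:
   the i-th coefficient of dpsi p is (i+1)_psi * p_(i+1). *)
Definition dpsi (p : {poly F}) : {poly F} :=
  \poly_(i < (size p).-1) (psinum i.+1 * p`_i.+1).

(* E^a(partial_psi) = sum_k a^k / k_psi! partial_psi^k, with 1/k_psi! = psi_k.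
   On a polynomial p the terms with k >= size p vanish, so the sum is finite. *)
Definition Epsi (a : F) (p : {poly F}) : {poly F} :=
  \sum_(k < size p) (a ^+ k * psi k) *: iter k dpsi p.

Definition inSigma (T : {poly F} -> {poly F}) : Prop :=
  linear T /\ forall (a : F) (p : {poly F}), T (Epsi a p) = Epsi a (T p).

Definition isDelta (Q : {poly F} -> {poly F}) : Prop :=
  inSigma Q /\ exists c : F, c != 0 /\ Q 'X = c%:P.

End PsiCalculus.

(* Main.v *)
Require Import Defs.
From HB Require Import structures.
From mathcomp Require Import all_boot all_order all_algebra.
From mathcomp Require Import ring zify.
Import GRing.Theory.
Local Open Scope ring_scope.

Definition ser {F : fieldType} (psi : nat -> F) (c : nat -> F) (p : {poly F}) :=
  \sum_(k < size p) c k *: iter k (dpsi psi) p.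

Lemma coef_dpsi {F : fieldType} {psi : nat -> F} (p : {poly F}) (i : nat) :
  (dpsi psi p)`_i = psinum psi i.+1 * p`_i.+1.
Proof.
rewrite coef_poly; case: ltnP => // h.
rewrite nth_default ?mulr0 //; move: h; case: (size p) => //.
Qed.

Lemma coefDk {F : fieldType} {psi : nat -> F} (psi_neq0 : forall n, psi n != 0)
  (k : nat) (p : {poly F}) (i : nat) : (iter k (dpsi psi) p)`_i = psi i / psi (i+k)%N * p`_(i+k)%N.
Proof.
elim: k i => [|k IH] i /=.
  by rewrite addn0 divff // mul1r.
rewrite coef_dpsi IH addSnnS /=.
have h1 := psi_neq0 i.+1. have h2 := psi_neq0 (i + k.+1).
field; by rewrite ?psi_neq0.
Qed.

Lemma sum_widen0 (R : nzRingType) (G : nat -> R) n m : (n <= m)%N ->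
  (forall k, (n <= k)%N -> G k = 0) -> \sum_(k < n) G k = \sum_(k < m) G k.
Proof.
move=> nm h; rewrite (big_ord_widen _ _ nm) big_mkcond; apply: eq_bigr => k _.
by case: ltnP => // /h ->.
Qed.

Lemma coef_ser {F : fieldType} {psi : nat -> F} (psi_neq0 : forall n, psi n != 0)
  (c : nat -> F) (p : {poly F}) (N i : nat) : (size p <= N)%N ->
  (ser psi c p)`_i = \sum_(k < N) c k * (psi i / psi (i+k)%N * p`_(i+k)%N).
Proof.
move=> hN; rewrite /ser coef_sum.
transitivity (\sum_(k < size p) c k * (psi i / psi (i+k)%N * p`_(i+k)%N)).
  by apply: eq_bigr => k _; rewrite coefZ coefDk.
apply: (@sum_widen0 _ (fun k => c k * (psi i / psi (i+k)%N * p`_(i+k)%N)) _ _ hN).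
move=> k hk /=; rewrite nth_default ?mulr0 //; exact: leq_trans hk (leq_addl _ _).
Qed.

Lemma size_ser {F : fieldType} {psi : nat -> F} (psi_neq0 : forall n, psi n != 0)
  (c : nat -> F) (p : {poly F}) : (size (ser psi c p) <= size p)%N.
Proof.
apply/leq_sizeP => j hj; rewrite (coef_ser psi_neq0 _ _ _ _ (leqnn _)).
apply: big1 => k _; rewrite nth_default ?mulr0 //; exact: leq_trans hj (leq_addr _ _).
Qed.

Lemma ser_lin {F : fieldType} {psi : nat -> F} (psi_neq0 : forall n, psi n != 0)
  (c : nat -> F) (a : F) (u v : {poly F}) : ser psi c (a *: u + v) = a *: ser psi c u + ser psi c v.
Proof.
set N := maxn (size u) (size v).
have hu : (size u <= N)%N by rewrite leq_maxl.
have hv : (size v <= N)%N by rewrite leq_maxr.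
have huv : (size (a *: u + v)%R <= N)%N.
  apply: leq_trans (size_polyD _ _) _; rewrite geq_max.
  by rewrite (leq_trans (size_scale_leq _ _) hu) hv.
apply/polyP => i; rewrite coefD coefZ !(coef_ser psi_neq0 _ _ _ _ huv, coef_ser psi_neq0 _ _ _ _ hu, coef_ser psi_neq0 _ _ _ _ hv).
rewrite mulr_sumr -big_split /=; apply: eq_bigr => k _.
rewrite coefD coefZ; ring.
Qed.

Lemma lin0 (F : fieldType) (T : {poly F} -> {poly F}) : linear T -> T 0 = 0.
Proof.
move=> lT; have := lT 1 0 0; rewrite scale1r addr0 scale1r => h.
by apply: (@addrI _ (T 0)); rewrite addr0 -h.
Qed.

Lemma lin_sum (F : fieldType) (T : {poly F} -> {poly F}) (lT : linear T) n
  (a : 'I_n -> F) (v : 'I_n -> {poly F}) :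
  T (\sum_(i < n) a i *: v i) = \sum_(i < n) a i *: T (v i).
Proof.
elim: n a v => [|n IH] a v; first by rewrite !big_ord0 lin0.
by rewrite !big_ord_recr /= addrC lT addrC IH.
Qed.

Lemma ser_comm {F : fieldType} {psi : nat -> F} (psi_neq0 : forall n, psi n != 0)
  (c d : nat -> F) (p : {poly F}) : ser psi c (ser psi d p) = ser psi d (ser psi c p).
Proof.
apply/polyP => i.
rewrite (coef_ser psi_neq0 _ _ (size p) _ (size_ser psi_neq0 _ _)).
rewrite (coef_ser psi_neq0 _ _ (size p) _ (size_ser psi_neq0 _ _)).
under eq_bigr => k _ do rewrite (coef_ser psi_neq0 d p (size p) (i+k)%N (leqnn _)) !mulr_sumr.
under [RHS]eq_bigr => k _ do rewrite (coef_ser psi_neq0 c p (size p) (i+k)%N (leqnn _)) !mulr_sumr.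
rewrite exchange_big /=; apply: eq_bigr => k _; apply: eq_bigr => j _.
rewrite -!addnA [(j + k)%N]addnC.
have h1 := psi_neq0 (i + j)%N. have h2 := psi_neq0 (i + k)%N.
field; by rewrite ?psi_neq0.
Qed.

Lemma dpsi_ser {F : fieldType} {psi : nat -> F} (psi_neq0 : forall n, psi n != 0)
  (c : nat -> F) (p : {poly F}) : dpsi psi (ser psi c p) = ser psi c (dpsi psi p).
Proof.
have hD : (size (dpsi psi p) <= size p)%N.
  apply: leq_trans (size_poly _ _) _; exact: leq_pred.
apply/polyP => i.
rewrite coef_dpsi (coef_ser psi_neq0 _ _ (size p) _ (leqnn _)).
rewrite (coef_ser psi_neq0 _ _ (size p) _ hD) mulr_sumr; apply: eq_bigr => k _.
rewrite coef_dpsi /psinum addSn.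
have h1 := psi_neq0 (i + k).+1. have h2 := psi_neq0 i.+1.
field; by rewrite ?psi_neq0.
Qed.

Lemma dpsi_ser_shift {F : fieldType} {psi : nat -> F} (psi_neq0 : forall n, psi n != 0)
  (c : nat -> F) (p : {poly F}) : c 0%N = 0 ->
  ser psi c p = dpsi psi (ser psi (fun k => c k.+1) p).
Proof.
move=> c0; apply/polyP => i.
rewrite (coef_ser psi_neq0 _ _ (size p).+1 _ (leqnSn _)) big_ord_recl c0 mul0r add0r.
rewrite coef_dpsi (coef_ser psi_neq0 _ _ (size p) _ (leqnn _)) mulr_sumr.
apply: eq_bigr => k _ /=; rewrite /psinum /bump /= add1n addnS addSn.
have h1 := psi_neq0 (i + k).+1. have h2 := psi_neq0 i.+1.
field; by rewrite ?psi_neq0.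
Qed.

Lemma ser0 {F : fieldType} {psi : nat -> F} (c : nat -> F) : ser psi c 0 = 0.
Proof. by rewrite /ser size_poly0 big_ord0. Qed.

Lemma ser_top {F : fieldType} {psi : nat -> F} (psi_neq0 : forall n, psi n != 0)
  (c : nat -> F) (p : {poly F}) n : (size p <= n.+1)%N ->
  (ser psi c p)`_n = c 0%N * p`_n.
Proof.
move=> hs; rewrite (coef_ser psi_neq0 _ _ _ _ hs) big_ord_recl addn0 divff // mul1r.
rewrite big1 ?addr0 // => k _; rewrite nth_default ?mulr0 //.
by apply: leq_trans hs _; rewrite lift0 addnS ltnS leq_addr.
Qed.

Lemma ser_sub {F : fieldType} {psi : nat -> F} (psi_neq0 : forall n, psi n != 0)
  (c : nat -> F) (p q : {poly F}) : ser psi c (p - q) = ser psi c p - ser psi c q.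
Proof.
have := ser_lin psi_neq0 c (-1) q p.
by rewrite !scaleN1r addrC [_ + ser _ _ _]addrC.
Qed.

Lemma ser_inj {F : fieldType} {psi : nat -> F} (psi_neq0 : forall n, psi n != 0)
  (c : nat -> F) : c 0%N != 0 -> injective (ser psi c).
Proof.
move=> c0 p q e; apply/eqP; rewrite -subr_eq0; apply/eqP.
have h : ser psi c (p - q) = 0 by rewrite ser_sub // e subrr.
move: h; set r := p - q => h.
apply/eqP; apply/negPn/negP => rn0.
have hs : size r = (size r).-1.+1 by rewrite prednK // size_poly_gt0.
have := ser_top psi_neq0 c r (size r).-1 (eq_leq hs).
rewrite h coef0 => /esym/eqP; rewrite mulf_eq0 (negPf c0) /=.
have := lead_coef_eq0 r; rewrite /lead_coef (negPf rn0) => -> //.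
Qed.

Lemma ser_surj {F : fieldType} {psi : nat -> F} (psi_neq0 : forall n, psi n != 0)
  (c : nat -> F) : c 0%N != 0 -> forall y, exists p, ser psi c p = y.
Proof.
move=> c0 y.
suff : forall n (y : {poly F}), (size y <= n)%N -> exists p, ser psi c p = y.
  by apply; exact: leqnn.
elim=> [|n IH] {}y hy.
  by exists 0; rewrite ser0; apply/esym/eqP; rewrite -size_poly_eq0 -leqn0.
set p0 := (y`_n / c 0%N) *: 'X^n.
have hp0 : (size p0 <= n.+1)%N.
  by apply: leq_trans (size_scale_leq _ _) _; rewrite size_polyXn.
have hy' : (size (y - ser psi c p0)%R <= n)%N.
  apply/leq_sizeP => j hj; rewrite coefB.
  move: hj; rewrite leq_eqVlt => /orP[/eqP <-|hj].
    rewrite ser_top // coefZ coefXn eqxx mulr1 mulrC divfK // subrr //.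
  rewrite !nth_default ?subr0 //.
    exact: leq_trans (size_ser psi_neq0 _ _) (leq_trans hp0 hj).
  exact: leq_trans hy hj.
have [p1 hp1] := IH _ hy'.
by exists (p0 + p1); rewrite -[p0]scale1r ser_lin // scale1r hp1 addrC subrK.
Qed.

Lemma natr_inj0 (F : fieldType) (charF0 : [pchar F] =i pred0) (i j : nat) :
  (i%:R : F) = j%:R -> i = j.
Proof.
have hc : forall n : nat, (n%:R == 0 :> F) = (n == 0)%N by apply/pcharf0P.
wlog h : i j / (i <= j)%N.
  by move=> W e; case/orP: (leq_total i j) => h; [|apply/esym]; apply: W.
move=> e; apply/eqP; rewrite eqn_leq h /=.
have := hc (j - i)%N; rewrite natrB // e subrr eqxx => /esym/eqP.
by move/eqP; rewrite subn_eq0.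
Qed.

Lemma poly_ext0 (F : fieldType) (charF0 : [pchar F] =i pred0) (p : {poly F}) :
  (forall a, p.[a] = 0) -> p = 0.
Proof.
move=> h; apply/eqP/negPn/negP => pn0.
have : (size [seq (i%:R : F) | i <- iota 0 (size p)] < size p)%N.
  apply: (max_poly_roots pn0).
    by apply/allP => x _; rewrite /root h.
  rewrite map_inj_in_uniq ?iota_uniq // => i j _ _; exact: natr_inj0.
by rewrite size_map size_iota ltnn.
Qed.

Lemma linZ (F : fieldType) (T : {poly F} -> {poly F}) (lT : linear T) b q :
  T (b *: q) = b *: T q.
Proof. by have := lT b q 0; rewrite !addr0 lin0 // addr0. Qed.

Lemma Epsi0 {F : fieldType} {psi : nat -> F} (psi0 : psi 0%N = 1)
  (psi_neq0 : forall n, psi n != 0) a (r : {poly F}) : (Epsi psi a r).[0] = r.[a].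
Proof.
rewrite horner_coef0 /Epsi coef_sum horner_coef; apply: eq_bigr => k _.
rewrite coefZ coefDk // add0n psi0.
have h := psi_neq0 k. field. done.
Qed.

Lemma iterDX {F : fieldType} {psi : nat -> F} (psi_neq0 : forall n, psi n != 0)
  (k n : nat) : (k <= n)%N ->
  iter k (dpsi psi) 'X^n = (psi (n - k)%N / psi n) *: 'X^(n - k).
Proof.
move=> kn; apply/polyP => i; rewrite coefDk // coefZ !coefXn.
have -> : ((i + k)%N == n) = (i == n - k)%N.
  apply/eqP/eqP => [<-|->]; [by rewrite addnK | by rewrite subnK].
by case: eqP => [->|_]; rewrite ?subnK ?mulr0 ?mulr1.
Qed.

Lemma expansion {F : fieldType} (charF0 : [pchar F] =i pred0) {psi : nat -> F}
  (psi0 : psi 0%N = 1) (psi_neq0 : forall n, psi n != 0)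
  (T : {poly F} -> {poly F}) : inSigma psi T ->
  forall p, T p = ser psi (fun k => psi k * (T 'X^k).[0]) p.
Proof.
move=> [lT cT].
set c := fun k => _.
have mono : forall n, T 'X^n = ser psi c 'X^n.
  move=> n; apply/eqP; rewrite -subr_eq0; apply/eqP; apply: poly_ext0 => // a.
  rewrite hornerD hornerN; apply/eqP; rewrite subr_eq0; apply/eqP.
  rewrite -(Epsi0 psi0 psi_neq0) -cT /Epsi size_polyXn lin_sum //.
  rewrite /ser size_polyXn !horner_sum (reindex_inj rev_ord_inj) /=.
  apply: eq_bigr => k _.
  have kn : (k <= n)%N by rewrite -ltnS.
  rewrite !hornerZ subSS iterDX ?leq_subr // linZ // hornerZ subKn //.
  rewrite iterDX // hornerZ hornerXn /c.
  have h := psi_neq0 n. field. done.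
move=> p.
rewrite -[p]coefK poly_def (lin_sum _ _ lT) (lin_sum _ _ (ser_lin psi_neq0 c)).
by apply: eq_bigr => i _; rewrite mono.
Qed.

Theorem mainTheorem10 (F : fieldType) (charF0 : [pchar F] =i pred0)
    (psi : nat -> F) (psi0 : psi 0%N = 1) (psi_neq0 : forall n, psi n != 0)
    (Q : {poly F} -> {poly F}) (linQ : linear Q) :
  isDelta psi Q <->
  exists S Sinv : {poly F} -> {poly F},
    [/\ inSigma psi S, inSigma psi Sinv, cancel S Sinv, cancel Sinv S &
        forall p, Q p = dpsi psi (S p)].
Proof.
have size2 : (size ('X : {poly F}) <= 2)%N by rewrite size_polyX.
split.
- move=> [[lQ cQ] [q0 [q0n QX]]].
  set c := fun k => psi k * (Q 'X^k).[0].
  have hexp := expansion charF0 psi0 psi_neq0 Q (conj lQ cQ).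
  have X1 : (ser psi c 'X)`_1 = c 0%N.
    rewrite (coef_ser psi_neq0 _ _ _ _ size2) !big_ord_recl big_ord0 /=.
    by rewrite !coefX /= mulr1 mulr0 mulr0 addr0 divff // mulr1 addr0.
  have X0 : (ser psi c 'X)`_0 = c 1%N * (psi 0%N / psi 1%N).
    rewrite (coef_ser psi_neq0 _ _ _ _ size2) !big_ord_recl big_ord0 /=.
    by rewrite !coefX /= !mulr1 !mulr0 add0r addr0.
  have c0 : c 0%N = 0 by rewrite -X1 -hexp QX coefC.
  have c1 : c 1%N != 0.
    apply/negP => /eqP h; have : (Q 'X)`_0 = q0 by rewrite QX coefC.
    by rewrite hexp X0 h mul0r => e; move: q0n; rewrite -e eqxx.
  set S := ser psi (fun k => c k.+1).
  have surjb : forall y, exists p, S p == y.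
    move=> y; have [p hp] := ser_surj psi_neq0 (fun k => c k.+1) c1 y.
    by exists p; apply/eqP.
  have Sinj : injective S by exact: ser_inj.
  have Slin : linear S by move=> a u v; exact: ser_lin.
  have Scomm : forall a p, S (Epsi psi a p) = Epsi psi a (S p).
    move=> a p; exact: (ser_comm psi_neq0 _ (fun k => a ^+ k * psi k)).
  pose Sinv y := xchoose (surjb y).
  have SK : forall y, S (Sinv y) = y by move=> y; apply/eqP/(xchooseP (surjb y)).
  exists S, Sinv; split => //.
  + split; [move=> a u v; apply: Sinj; rewrite Slin !SK //|].
    by move=> a p; apply: Sinj; rewrite Scomm !SK.
  + by move=> p; apply: Sinj; rewrite SK.
  + by move=> p; rewrite hexp; apply: dpsi_ser_shift.
- move=> [S [Sinv [[lS cS] [lSi cSi] SSi SiS hQ]]].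
  split.
    split => // a p; rewrite !hQ cS.
    exact: (dpsi_ser psi_neq0 (fun k => a ^+ k * psi k)).
  set s := fun k => psi k * (S 'X^k).[0].
  have hexp := expansion charF0 psi0 psi_neq0 S (conj lS cS).
  have s0 : s 0%N != 0.
    apply/negP => /eqP h.
    have S1 : S 1 = 0.
      rewrite hexp; apply/polyP => i.
      rewrite (coef_ser psi_neq0 _ _ 1 _ _) ?size_poly1 // big_ord1 coef0.
      by rewrite [X in X * _]h mul0r.
    by move: (oner_neq0 {poly F}); rewrite -{1}[1]SSi S1 lin0 // eqxx.
  exists (psinum psi 1 * s 0%N); split.
    apply: mulf_neq0 => //; rewrite /psinum; apply: mulf_neq0; rewrite ?invr_eq0 //.
  rewrite hQ hexp; apply/polyP => i.
  rewrite coef_dpsi coefC (coef_ser psi_neq0 _ _ _ _ size2) !big_ord_recl big_ord0 /=.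
  rewrite !coefX !addn0 !addn1.
  case: i => [|i] /=; rewrite /s.
    rewrite !mulr1 !mulr0 !addr0; have h := psi_neq0 1%N; field; done.
  by rewrite !mulr0 !addr0 mulr0.
Qed.
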